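(* Let $X_0$ and $X_1$ be mm-spaces with $X_0\prec X_1$, and let $f\colon X_1\to X_0$ be a 1-Lipschitz map with $f_*\mu_{X_1}=\mu_{X_0}$. For $0<t<1$ define a metric on $X_1$ by $d_{X_t}(x,x'):=(1-t)\,d_{X_0}(f(x),f(x'))+t\,d_{X_1}(x,x')$ and the mm-space $X_t:=(X_1,d_{X_t},\mu_{X_1})$. Then $[0,1]\ni t\mapsto X_t$ is a $\square$-continuous path from $X_0$ to $X_1$, and it is monotone with respect to the Lipschitz order: $X_s\prec X_t$ for all $0\le s\le t\le1$.
   Context: An mm-space is a triple $(X,d_X,\mu_X)$ where $(X,d_X)$ is a complete separable metric space and $\mu_X$ a Borel probability measure, considered up to mm-isomorphism (an isometry between the supports of the measures pushing one measure to the other). A parameter of $X$ is a Borel map $\varphi\colon [0,1)\to X$ with $\varphi_*\mathcal{L}^1=\mu_X$. The box distance $\square(X,Y)$ is the infimum of $\varepsilon\ge 0$ such that there exist parameters $\varphi$ of $X$, $\psi$ of $Y$ and a Borel set $I_0\subset[0,1)$ with $\mathcal{L}^1(I_0)\ge 1-\varepsilon$ and $|d_X(\varphi(s),\varphi(t))-d_Y(\psi(s),\psi(t))|\le\varepsilon$ for all $s,t\in I_0$. Lipschitz order: $Y\prec X$ if there exists a 1-Lipschitz map $g\colon X\to Y$ with $g_*\mu_X=\mu_Y$. *)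

(* Defs.v *)
From HB Require Import structures.
From mathcomp Require Import all_boot all_order all_algebra.
From mathcomp Require Import all_classical all_reals all_analysis.
Set Implicit Arguments. Unset Strict Implicit. Unset Printing Implicit Defensive.
Import Order.TTheory GRing.Theory Num.Theory.
Import numFieldNormedType.Exports.
Local Open Scope classical_set_scope.
Local Open Scope ring_scope.

(* Raw data of a (candidate) mm-space: carrier, distance, measure
   (real-valued set function, only meaningful on Borel sets). *)
Record mmData (R : realType) := MMData {
  carrier :> Type;
  mdist : carrier -> carrier -> R;
  mmeas : set carrier -> R }.

Arguments mmeas {R} m _.
Section MM.
Variable R : realType.

Definition d_open (T : Type) (d : T -> T -> R) (A : set T) : Prop :=
  forall x, A x -> exists e : R, 0 < e /\ forall y, d x y < e -> A y.

Definition d_borel (T : Type) (d : T -> T -> R) : set (set T) :=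
  <<s [set A | d_open d A] >>.

Definition mm_borel (X : mmData R) : set (set X) := d_borel (@mdist R X).
Arguments mm_borel : clear implicits.

Definition is_metric (T : Type) (d : T -> T -> R) : Prop :=
  (forall x y, d x y = 0 <-> x = y) /\
  (forall x y, d x y = d y x) /\
  (forall x y z, d x z <= d x y + d y z).

Definition d_cauchy (T : Type) (d : T -> T -> R) (u : nat -> T) : Prop :=
  forall e : R, 0 < e -> exists N, forall m n, (N <= m)%N -> (N <= n)%N ->
    d (u m) (u n) < e.

Definition d_converges (T : Type) (d : T -> T -> R) (u : nat -> T) (x : T) :=
  forall e : R, 0 < e -> exists N, forall n, (N <= n)%N -> d (u n) x < e.

Definition d_complete (T : Type) (d : T -> T -> R) : Prop :=
  forall u : nat -> T, d_cauchy d u -> exists x, d_converges d u x.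

Definition d_separable (T : Type) (d : T -> T -> R) : Prop :=
  exists u : nat -> T, forall x (e : R), 0 < e -> exists n, d x (u n) < e.

Definition borel_probability (T : Type) (S : set (set T)) (mu : set T -> R) :=
  (forall A, S A -> 0 <= mu A) /\
  mu setT = 1 /\
  (forall F : nat -> set T, (forall n, S (F n)) -> trivIset setT F ->
     (fun n => \sum_(i < n) mu (F i)) @ \oo --> mu (\bigcup_n F n)).

Definition mm_space (X : mmData R) : Prop :=
  is_metric (@mdist R X) /\ d_complete (@mdist R X) /\
  d_separable (@mdist R X) /\ borel_probability (mm_borel X) (@mmeas R X).

Definition one_lipschitz (X Y : mmData R) (g : X -> Y) : Prop :=
  forall x x', mdist (g x) (g x') <= mdist x x'.

Definition push_eq (X Y : mmData R) (g : X -> Y) : Prop :=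
  forall B, mm_borel Y B -> mmeas X (g @^-1` B) = mmeas Y B.

(* Lipschitz order: lip_prec Y X  means  Y ≺ X *)
Definition lip_prec (Y X : mmData R) : Prop :=
  exists g : X -> Y, one_lipschitz g /\ push_eq g.

Definition parameter (X : mmData R) (phi : R -> X) : Prop :=
  forall B, mm_borel X B ->
    measurable ([set s : R | `[0, 1[%classic s /\ B (phi s)]) /\
    lebesgue_measure ([set s : R | `[0, 1[%classic s /\ B (phi s)]) =
      (mmeas X B)%:E.

Definition box_admissible (X Y : mmData R) (e : R) : Prop :=
  0 <= e /\
  exists (phi : R -> X) (psi : R -> Y) (I0 : set R),
    parameter phi /\ parameter psi /\
    I0 `<=` `[0, 1[%classic /\ measurable I0 /\
    ((1 - e)%:E <= lebesgue_measure I0)%E /\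
    forall s t, I0 s -> I0 t ->
      `|mdist (phi s) (phi t) - mdist (psi s) (psi t)| <= e.

Definition box_dist (X Y : mmData R) : R := inf [set e | box_admissible X Y e].

Definition interp_dist (X0 X1 : mmData R) (f : X1 -> X0) (t : R) :=
  fun x x' : X1 => (1 - t) * mdist (f x) (f x') + t * mdist x x'.

Definition interp (X0 X1 : mmData R) (f : X1 -> X0) (t : R) : mmData R :=
  if t <= 0 then X0 else if 1 <= t then X1 else
  @MMData R X1 (interp_dist f t) (@mmeas R X1).

End MM.

(* Main.v *)
Require Import Defs.
From HB Require Import structures.
From mathcomp Require Import all_boot all_order all_algebra.
From mathcomp Require Import all_classical all_reals all_analysis.
From mathcomp Require Import ring lra.
Import Order.TTheory GRing.Theory Num.Theory.
Import numFieldNormedType.Exports.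
Local Open Scope classical_set_scope.
Local Open Scope ring_scope.

Section Aux.
Variables (R : realType).

Lemma metric_ge0 (T : Type) (d : T -> T -> R) : is_metric d -> forall x y, 0 <= d x y.
Proof.
move=> [h0 [hs ht]] x y.
have := ht x y x; rewrite (proj2 (h0 x x) erefl) hs => h.
by rewrite -(@pmulr_rge0 _ 2) // mulr2n mulrDl !mul1r.
Qed.

Lemma dopen_equiv (T : Type) (d d' : T -> T -> R) (c : R) : 0 < c ->
  (forall x y, d x y <= d' x y) -> (forall x y, c * d' x y <= d x y) ->
  d_open d = d_open d'.
Proof.
move=> c0 h1 h2; apply/funext => A; apply/propext; split.
- move=> oA x Ax; have [e [e0 he]] := oA x Ax.
  exists e; split => // y dy; apply: he; exact: le_lt_trans (h1 _ _) dy.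
- move=> oA x Ax; have [e [e0 he]] := oA x Ax.
  exists (c * e); split; first exact: mulr_gt0.
  move=> y dy; apply: he; rewrite -(ltr_pM2l c0); exact: le_lt_trans (h2 _ _) dy.
Qed.

Lemma borel_preimage (T U : Type) (d : T -> T -> R) (d' : U -> U -> R) (g : T -> U) :
  (forall A, d_open d' A -> d_open d (g @^-1` A)) ->
  forall B, d_borel d' B -> d_borel d (g @^-1` B).
Proof.
move=> hg.
have [s0 sC sU] : sigma_algebra setT (d_borel d) := smallest_sigma_algebra _ _.
have hS : sigma_algebra setT [set B | d_borel d (g @^-1` B)].
  split => /=.
  - by rewrite preimage_set0.
  - move=> A hA; have := sC _ hA. by rewrite !setTD preimage_setC.
  - move=> F hF; rewrite preimage_bigcup; exact: sU.
have := @smallest_sub _ (sigma_algebra setT) [set A | d_open d' A] _ hS.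
apply=> A oA /=; apply: sub_gen_smallest; exact: hg.
Qed.

Variables (X0 X1 : mmData R) (f : X1 -> X0).
Hypotheses (H0 : mm_space X0) (H1 : mm_space X1) (Hf : one_lipschitz f) (Hp : push_eq f).

Lemma d0_ge0 (x y : X0) : 0 <= Defs.mdist x y :> R.
Proof. by apply: metric_ge0; case: H0. Qed.
Lemma d1_ge0 (x y : X1) : 0 <= Defs.mdist x y.
Proof. by apply: metric_ge0; case: H1. Qed.

Lemma interp_le1 u (x y : X1) : 0 <= u <= 1 -> interp_dist f u x y <= Defs.mdist x y.
Proof.
case/andP=> u0 u1; rewrite /interp_dist.
have h := Hf x y; have := d0_ge0 (f x) (f y); have := d1_ge0 x y.
have : 0 <= 1 - u by rewrite subr_ge0.
move=> h1 h2 h3.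
have : (1 - u) * Defs.mdist (f x) (f y) <= (1 - u) * Defs.mdist x y by rewrite ler_wpM2l.
lra.
Qed.

Lemma interp_ge u (x y : X1) : 0 <= u <= 1 -> u * Defs.mdist x y <= interp_dist f u x y.
Proof.
case/andP=> u0 u1; rewrite /interp_dist; rewrite lerDr; apply: mulr_ge0.
  by rewrite subr_ge0.
exact: d0_ge0.
Qed.

Lemma dborel_interp u : 0 < u <= 1 -> d_borel (interp_dist f u) = d_borel (@Defs.mdist R X1).
Proof.
case/andP=> u0 u1; rewrite /d_borel (@dopen_equiv _ _ (@Defs.mdist R X1) u) //.
  by move=> x y; apply: interp_le1; rewrite u1 ltW.
by move=> x y; apply: interp_ge; rewrite u1 ltW.
Qed.

Lemma f_borel B : d_borel (@Defs.mdist R X0) B -> d_borel (@Defs.mdist R X1) (f @^-1` B).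
Proof.
apply: borel_preimage => A oA x Ax; have [e [e0 he]] := oA _ Ax.
exists e; split => // y dy; apply: he; exact: le_lt_trans (Hf _ _) dy.
Qed.

Lemma interp_diff s t (a b : X1) : `|interp_dist f s a b - interp_dist f t a b| <= `|s - t| * Defs.mdist a b.
Proof.
rewrite /interp_dist.
have -> : (1 - s) * Defs.mdist (f a) (f b) + s * Defs.mdist a b -
  ((1 - t) * Defs.mdist (f a) (f b) + t * Defs.mdist a b) = (s - t) * (Defs.mdist a b - Defs.mdist (f a) (f b)) by ring.
rewrite normrM ler_wpM2l // ger0_norm ?subr_ge0 ?Hf //.
by rewrite gerBl d0_ge0.
Qed.


Lemma param_interp (phi : R -> X1) : parameter phi -> forall u, 0 <= u <= 1 ->
  exists p : R -> interp f u, parameter p /\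
    forall a b, Defs.mdist (p a) (p b) = interp_dist f u (phi a) (phi b).
Proof.
move=> hphi u /andP[u0 u1]; rewrite /interp.
case: ifP => hu0.
  have -> : u = 0 by apply/le_anti; rewrite hu0 u0.
  exists (f \o phi); split.
    move=> B hB; have := hphi _ (@f_borel B hB); rewrite Hp //.
  by move=> a b; rewrite /interp_dist subr0 mul1r mul0r addr0.
case: ifP => hu1.
  have -> : u = 1 by apply/le_anti; rewrite hu1 u1.
  exists phi; split => // a b.
  by rewrite /interp_dist subrr mul0r add0r mul1r.
exists phi; split => // B hB; apply: hphi.
move: hB; rewrite /mm_borel /= dborel_interp //.
by rewrite u1 ltNge hu0.
Qed.

Lemma param_back u : 0 < u -> u <= 1 -> forall p : R -> interp f u, parameter p ->
  exists phi : R -> X1, parameter phi.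
Proof.
move=> u0 u1; rewrite /interp; case: ifP => [h|_].
  by move: u0; rewrite ltNge h.
case: ifP => _ p hp; exists p => // B hB; apply: hp.
by rewrite /mm_borel /= dborel_interp // u0.
Qed.

End Aux.

Lemma box_lt (R : realType) (X Y : mmData R) (e : R) :
  (~ exists e', box_admissible X Y e') \/ (exists e', e' < e /\ box_admissible X Y e') ->
  0 < e -> box_dist X Y < e.
Proof.
move=> [hn|[e' [lt he]]] e0.
  rewrite /box_dist.
  have -> : [set e | box_admissible X Y e] = set0.
    by apply/seteqP; split => // x hx; apply: hn; exists x.
  by rewrite inf0.
apply: le_lt_trans lt; apply: ge_inf => //.
by exists 0 => x [].
Qed.

Lemma box_self (R : realType) (X : mmData R) (e : R) : 0 < e -> box_dist X X < e.
Proof.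
move=> e0; apply: box_lt => //.
have [[e' [_ [phi [_ [_ [hphi _]]]]]]|hn] := pselect (exists e', box_admissible X X e'); last by left.
right; exists 0; split => //; split => //.
exists phi, phi, `[0, 1[%classic; split => //; split => //; split => //; split.
  exact: measurable_itv.
split.
  by rewrite lebesgue_measure_itv /= lte_fin ltr01 oppr0 adde0 addr0.
by move=> s t _ _; rewrite subrr normr0.
Qed.

Section Aux2.
Variables (R : realType) (X0 X1 : mmData R) (f : X1 -> X0).
Hypotheses (H0 : mm_space X0) (H1 : mm_space X1) (Hf : one_lipschitz f) (Hp : push_eq f).

Lemma cont_phi (phi : R -> X1) : parameter phi -> forall e : R, 0 < e ->
  exists d : R, 0 < d /\ forall s t : R, 0 <= s <= 1 -> 0 <= t <= 1 -> `|s - t| < d ->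
  box_dist (interp f s) (interp f t) < e.
Proof.
move=> hphi e e0.
set x0 := phi 0.
pose ball (r : R) := [set y : X1 | Defs.mdist x0 y < r].
have [hm [hsym htri]] : is_metric (@Defs.mdist R X1) by case: H1.
have bopen r : @mm_borel R X1 (ball r).
  apply: sub_gen_smallest => y /= hy; exists (r - Defs.mdist x0 y); split.
    by rewrite subr_gt0.
  move=> z hz; have := htri x0 y z; rewrite /ball /=; lra.
pose I (n : nat) := [set a : R | `[0, 1[%classic a /\ ball n%:R (phi a)].
have mI n : measurable (I n) := (hphi _ (bopen n%:R)).1.
have UI : \bigcup_n I n = `[0, 1[%classic.
  apply/seteqP; split => [a [n _ []]//|a ha].
  exists (Num.bound (Defs.mdist x0 (phi a))) => //; split => //.
  rewrite /ball /=; apply: archi_boundP; exact: d1_ge0.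
have ndI : nondecreasing_seq I.
  move=> n m nm; apply/subsetPset => a [ha hb]; split => //.
  by apply: lt_le_trans hb _; rewrite ler_nat.
have mU : measurable (\bigcup_n I n) by rewrite UI; exact: measurable_itv.
have cv := @nondecreasing_cvg_mu _ _ R lebesgue_measure _ mI mU ndI.
rewrite UI in cv.
have l1 : lebesgue_measure (`[0,1[%classic : set R) = 1%:E.
  by rewrite lebesgue_measure_itv /= lte_fin ltr01 oppr0 adde0.
have {}cv : lebesgue_measure \o I @ \oo --> 1%:E by rewrite -l1; exact: cv.
have ndu : nondecreasing_seq (lebesgue_measure \o I).
  move=> n m nm /=; apply: le_measure; rewrite ?inE; [exact: mI|exact: mI|]; have := ndI _ _ nm; by move/subsetPset.
have cu : cvgn (lebesgue_measure \o I) by apply/cvg_ex; exists 1%:E.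
have ll : ((1 - e / 2)%:E < limn (lebesgue_measure \o I))%E.
  rewrite (cvg_lim _ cv) // lte_fin; lra.
have [N _ hN] := lte_lim ndu cu ll.
have {}hN := hN N (leqnn N).
pose n : R := N%:R.
have n0 : 0 <= n by rewrite /n.
pose q := 4 * n + 1.
have q0 : 0 < q by rewrite /q; lra.
pose d := e / q.
have d0 : 0 < d by rewrite /d divr_gt0.
have dq : d * q = e by rewrite /d divfK // gt_eqF.
exists d; split => // s t hs ht hst.
apply: box_lt => //; right; exists (e / 2); split; first lra.
have [ps [hps eps]] := @param_interp R X0 X1 f H0 H1 Hf Hp phi hphi s hs.
have [pt [hpt ept]] := @param_interp R X0 X1 f H0 H1 Hf Hp phi hphi t ht.
split; first lra.
exists ps, pt, (I N); split => //; split => //; split; first by move=> a [].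
split => //; split => //.
move=> a b [_ ha] [_ hb]; rewrite eps ept.
apply: le_trans (@interp_diff R X0 X1 f H0 Hf _ _ _ _) _.
have hD : Defs.mdist (phi a) (phi b) <= 2 * n.
  have := htri (phi a) x0 (phi b); rewrite (hsym (phi a) x0).
  move: ha hb; rewrite /ball /= -/n; lra.
have D0 : 0 <= Defs.mdist (phi a) (phi b) by exact: d1_ge0.
have := ler_pM (normr_ge0 (s - t)) D0 (ltW hst) hD.
move=> h; apply: le_trans h _.
rewrite -dq /q; nra.
Qed.

End Aux2.

Theorem proposition7p1 (R : realType) (X0 X1 : mmData R) (f : X1 -> X0) :
  mm_space X0 -> mm_space X1 -> lip_prec X0 X1 ->
  one_lipschitz f -> push_eq f ->
  (forall t : R, 0 < t < 1 -> mm_space (interp f t)) /\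
  (forall t : R, 0 <= t <= 1 -> forall e : R, 0 < e ->
     exists d : R, 0 < d /\ forall s : R, 0 <= s <= 1 -> `|s - t| < d ->
       box_dist (interp f s) (interp f t) < e) /\
  (forall s t : R, 0 <= s -> s <= t -> t <= 1 -> lip_prec (interp f s) (interp f t)).
Proof.
move=> H0 H1 _ Hf Hp.
have [[hm0 [hsym0 htri0]] _] := H0.
have [[hm1 [hsym1 htri1]] [hc1 [hsep1 hb1]]] := H1.
split; [|split].
- move=> t /andP[t0 t1]; rewrite /interp.
  rewrite ifN; last by rewrite -ltNge.
  rewrite ifN; last by rewrite -ltNge.
  have t01 : 0 <= t <= 1 by rewrite (ltW t0) (ltW t1).
  have le1 := fun x y => @interp_le1 R X0 X1 f H0 H1 Hf t x y t01.
  have ge := fun x y => @interp_ge R X0 X1 f H0 t x y t01.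
  split; [|split; [|split]] => /=.
  + split; [|split].
    * move=> x y; split => [h|->]; last first.
        by rewrite /interp_dist (proj2 (hm0 _ _) erefl) (proj2 (hm1 _ _) erefl) !mulr0 addr0.
      apply/hm1; apply/eqP; rewrite eq_le d1_ge0 // andbT.
      have := ge x y; rewrite h => h'.
      by rewrite -(pmulr_rle0 _ t0).
    * by move=> x y; rewrite /interp_dist hsym0 hsym1.
    * move=> x y z; rewrite /interp_dist.
      have h0 := htri0 (f x) (f y) (f z); have h1 := htri1 x y z.
      have a0 : 0 <= 1 - t by rewrite subr_ge0 ltW.
      have := ler_wpM2l a0 h0; have := ler_wpM2l (ltW t0) h1.
      rewrite !mulrDr; lra.
  + move=> u hu.
    have [x hx] : exists x, d_converges (@Defs.mdist R X1) u x.
      apply: hc1 => e e0; have [N hN] := hu (t * e) (mulr_gt0 t0 e0).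
      exists N => m n hm hn; rewrite -(ltr_pM2l t0).
      exact: le_lt_trans (ge _ _) (hN _ _ hm hn).
    exists x => e e0; have [N hN] := hx e e0; exists N => n hn.
    exact: le_lt_trans (le1 _ _) (hN _ hn).
  + have [v hv] := hsep1; exists v => x e e0; have [n hn] := hv x e e0.
    exists n; exact: le_lt_trans (le1 _ _) hn.
  + by rewrite /mm_borel /= (@dborel_interp R X0 X1 f H0 H1 Hf) // t0 ltW.
- move=> t ht e e0.
  have [[phi hphi]|hn] := pselect (exists phi : R -> X1, parameter phi).
    have [d [d0 hd]] := @cont_phi R X0 X1 f H0 H1 Hf Hp phi hphi e e0.
    by exists d; split => // s hs hst; apply: hd.
  exists 1; split => // s hs _.
  have [->|hst] := eqVneq s t; first exact: box_self.
  apply: box_lt => //; left => -[e' [_ [p [q [I0 [hp [hq _]]]]]]].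
  case/andP: hs => s0 s1; case/andP: ht => t0 t1.
  have [s0'|s0''] := ltP 0 s.
    by apply: hn; exact: (@param_back R X0 X1 f H0 H1 Hf s s0' s1 p hp).
  have es : s = 0 by apply/le_anti; rewrite s0'' s0.
  have t0' : 0 < t by rewrite lt_neqAle t0 andbT; apply: contra hst => /eqP <-; rewrite es.
  by apply: hn; exact: (@param_back R X0 X1 f H0 H1 Hf t t0' t1 q hq).
- move=> s t s0 st t1.
  have le1 := fun u x y => @interp_le1 R X0 X1 f H0 H1 Hf u x y.
  rewrite /interp.
  case: ifPn => hs0.
    case: ifPn => ht0.
      by exists id; split => // x y.
    case: ifPn => ht1.
      by exists f.
    exists f; split => // x y /=; rewrite /interp_dist.
    have := Hf x y; have : 0 <= t by exact: le_trans st.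
    move=> tp h; have := ler_wpM2l tp h; lra.
  case: ifPn => hs1.
    rewrite ifN; last by rewrite -ltNge (lt_le_trans _ st) // ltNge.
    rewrite ifT; last exact: le_trans st.
    by exists id; split => // x y.
  rewrite ifN; last by rewrite -ltNge (lt_le_trans _ st) // ltNge.
  case: ifPn => ht1.
    exists id; split => // x y /=; apply: le1.
    by rewrite -!ltNge in hs0 hs1; rewrite (ltW hs0) (ltW hs1).
  exists id; split => // x y /=; rewrite /interp_dist.
  have := Hf x y; have : 0 <= t - s by rewrite subr_ge0.
  move=> tp h; have := ler_wpM2l tp h; lra.
Qed.
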